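(* For each infinite matrix $A=(A(i,j))_{i,j\in\mathbb{N}}$ with entries in $\{0,1\}$ and without identically zero rows, there exists an $A_\infty$-branching system on the measure space $([0,\infty),\mu)$, where $\mu$ is Lebesgue measure.
   Context: Notation: for measurable $Y,Z\subseteq X$, write $Y\stackrel{\mu\text{-a.e.}}{=}Z$ if $\mu(Y\setminus Z)=0=\mu(Z\setminus Y)$. For a measurable map $h$ on a measurable set $W$, $\mu\circ h$ is the measure $E\mapsto\mu(h(E))$ on $W$. For finite $U,V\subseteq\mathbb{N}$ and $j\in\mathbb{N}$ put $A(U,V,j)=\prod_{u\in U}A(u,j)\prod_{v\in V}(1-A(v,j))$. A transformation $F$ is nonsingular if $\mu(F^{-1}(E))=0$ whenever $\mu(E)=0$. An $A_\infty$-branching system on a $\sigma$-finite measure space $(X,\mu)$ is a family $(\{f_i\}_{i=1}^\infty,\{D_i\}_{i=1}^\infty)$ together with a nonsingular transformation $F:X\to X$ such that: (1) $f_i:D_i\to R_i$ is measurable, $D_i,R_i$ are measurable subsets of $X$, and $f_i(D_i)\stackrel{\mu\text{-a.e.}}{=}R_i$ for each $i$; (2) $F\circ f_i=\mathrm{id}_{D_i}$ $\mu$-a.e. on $D_i$ for each $i$; (3) $\mu(R_i\cap R_j)=0$ for $i\neq j$; (4) $\mu(R_j\cap D_i)=0$ if $A(i,j)=0$ and $\mu(R_j\setminus D_i)=0$ if $A(i,j)=1$; (5) for each pair $U,V$ of finite subsets of $\mathbb{N}$ such that $A(U,V,j)=1$ for only finitely many $j$, $\bigcap_{u\in U}D_u\cap\bigcap_{v\in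 V}(X\setminus D_v)\stackrel{\mu\text{-a.e.}}{=}\bigcup_{j:A(U,V,j)=1}R_j$; (6) there exist the Radon-Nikodym derivatives $\Phi_{f_i}$ of $\mu\circ f_i$ with respect to $\mu$ on $D_i$ and $\Phi_{f_i^{-1}}$ of $\mu\circ f_i^{-1}$ with respect to $\mu$ on $R_i$, where $f_i^{-1}:=F|_{R_i}$. *)

(* Defs.v *)
From HB Require Import structures.
From mathcomp Require Import all_boot all_order all_algebra.
From mathcomp Require Import all_classical all_reals all_analysis.
From mathcomp Require Import measurable_realfun lebesgue_integral.
Set Implicit Arguments. Unset Strict Implicit. Unset Printing Implicit Defensive.
Import Order.TTheory GRing.Theory Num.Theory.
Local Open Scope classical_set_scope.
Local Open Scope ring_scope.

Section BranchingDefs.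
Variable R : realType.

Notation leb := (@lebesgue_measure R).
Local Notation T := R.

Definition Xpos : set T := `[0%R, +oo[%classic.

Definition ae_seteq (Y Z : set T) : Prop :=
  leb.-negligible (Y `\` Z) /\ leb.-negligible (Z `\` Y).

(* A(U,V,j) = prod_{u in U} A(u,j) prod_{v in V} (1 - A(v,j)), as a boolean *)
Definition AUV (A : nat -> nat -> bool) (U V : seq nat) (j : nat) : bool :=
  all (fun u => A u j) U && all (fun v => ~~ A v j) V.

Definition has_RN_deriv (h : T -> T) (W : set T) : Prop :=
  exists Phi : T -> \bar R,
    measurable_fun W Phi /\ (forall x, W x -> (0 <= Phi x)%E) /\
    forall E : set T, measurable E -> E `<=` W ->
      measurable (h @` E) /\
      leb (h @` E) = (\int[leb]_(x in E) Phi x)%E.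

Definition nonsingular_on_X (F : T -> T) : Prop :=
  measurable_fun Xpos F /\ (forall x, Xpos x -> Xpos (F x)) /\
  forall E : set T, measurable E -> E `<=` Xpos ->
    leb E = 0%E -> leb (Xpos `&` F @^-1` E) = 0%E.

Definition A_branching_system (A : nat -> nat -> bool)
    (f : nat -> T -> T) (D Rg : nat -> set T) (F : T -> T) : Prop :=
  nonsingular_on_X F /\
  (forall i, measurable (D i) /\ D i `<=` Xpos /\
             measurable (Rg i) /\ Rg i `<=` Xpos /\
             measurable_fun (D i) (f i) /\
             (forall x, D i x -> Rg i (f i x)) /\
             ae_seteq (f i @` D i) (Rg i)) /\
  (forall i, leb.-negligible [set x | D i x /\ F (f i x) <> x]) /\
  (forall i j, i <> j -> leb (Rg i `&` Rg j) = 0%E) /\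
  (forall i j, ~~ A i j -> leb (Rg j `&` D i) = 0%E) /\
  (forall i j, A i j -> leb (Rg j `\` D i) = 0%E) /\
  (forall U V : seq nat, finite_set [set j | AUV A U V j] ->
     ae_seteq
       (Xpos `&` [set x | forall u, u \in U -> D u x]
             `&` [set x | forall v, v \in V -> ~ D v x])
       (\bigcup_(j in [set j | AUV A U V j]) Rg j)) /\
  (forall i, has_RN_deriv (f i) (D i) /\ has_RN_deriv F (Rg i)).

End BranchingDefs.

(* Main.v *)
Require Import Defs.
From HB Require Import structures.
From mathcomp Require Import all_boot all_order all_algebra.
From mathcomp Require Import all_classical all_reals all_analysis.
From mathcomp Require Import measurable_realfun lebesgue_integral.
From mathcomp Require Import lra zify.
Set Implicit Arguments. Unset Strict Implicit. Unset Printing Implicit Defensive.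
Import Order.TTheory GRing.Theory Num.Theory.


Definition rk (P : pred nat) n := count P (iota 0 n).

Lemma rkS (P : pred nat) n : rk P n.+1 = rk P n + P n.
Proof. by rewrite /rk -addn1 iotaD count_cat /= addn0 add0n. Qed.

Lemma rk_mono (P : pred nat) m n : m <= n -> rk P m <= rk P n.
Proof.
move=> /subnK <-; elim: (n - m) => [|k IH] //; rewrite addSn rkS; lia.
Qed.

Lemma rk_inj (P : pred nat) m n : P m -> P n -> rk P m = rk P n -> m = n.
Proof.
move=> Pm Pn e; case: (ltngtP m n) => // h.
- have := rk_mono P h; rewrite rkS Pm; lia.
- have := rk_mono P h; rewrite rkS Pn; lia.
Qed.

Lemma rk_surj (P : pred nat) : (forall n, exists m, n <= m /\ P m) ->
  forall k, exists m, P m /\ rk P m = k.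
Proof.
move=> inf.
have big : forall k, exists n, k < rk P n.
  elim=> [|k [n hn]].
    have [m [_ Pm]] := inf 0; exists m.+1; rewrite rkS Pm; lia.
  have [m [nm Pm]] := inf n; exists m.+1; rewrite rkS Pm.
  have := rk_mono P nm; lia.
have low : forall n k, k < rk P n -> exists m, P m /\ rk P m = k.
  elim=> [|n IH] k //; rewrite rkS.
  case Pn: (P n) => /= h; last by apply: IH; lia.
  case: (ltngtP k (rk P n)) => hk; [exact: IH | lia | by exists n].
move=> k; have [n hn] := big k; exact: low hn.
Qed.

Definition pj (m : nat) := logn 2 m.+1.

Lemma pj_inf j n : exists m, n <= m /\ pj m = j.
Proof.
have pos : 0 < 2 ^ j * n.*2.+1 by rewrite muln_gt0 expn_gt0.
exists (2 ^ j * n.*2.+1).-1; rewrite /pj prednK //; split.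
  have : 1 <= 2 ^ j by rewrite expn_gt0.
  rewrite -addnn; nia.
rewrite lognM ?expn_gt0 // pfactorK // logn_coprime ?addn0 //.
by rewrite coprime_sym coprimen2 /= odd_double.
Qed.

Local Open Scope classical_set_scope.
Local Open Scope ring_scope.

Section S.
Variable R : realType.
Notation leb := (@lebesgue_measure R).
Notation XP := (@Xpos R).

Lemma mshift (c : R) : measurable_fun setT (fun y : R => y + c).
Proof. by apply: measurable_funD => //; exact: measurable_id. Qed.

Section shift.
Variable c : R.
Let mc : measurable_fun (setT : set (measurableTypeR R)) (fun y : measurableTypeR R => ((y : R) + c : measurableTypeR R)) := mshift c.
Lemma leb_shift (A : set R) : measurable A ->
  leb ((fun y => y + c) @^-1` A) = leb A.
Proof.
move=> mA; symmetry.
have := @lebesgue_measure_unique R (pushforward (leb : set (measurableTypeR R) -> \bar R) (fun y : measurableTypeR R => ((y : R) + c : measurableTypeR R))).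
apply => //.
move=> X [[a b] _ <-] /=.
rewrite /pushforward.
have -> : (fun y : R => y + c) @^-1` `]a, b] = `]a - c, b - c]%classic.
  apply/seteqP; split => x /=; rewrite !in_itv /= ?lerBrDr ?ltrBlDr //.
rewrite !lebesgue_measure_itv /= !lte_fin ltrD2r.
by case: ifPn => // _; rewrite -!EFinD; congr (_%:E); rewrite opprB addrA subrK addrC.
Qed.
End shift.

Lemma leb_shiftN (c : R) (A : set R) : measurable A ->
  leb ((fun y => y - c) @^-1` A) = leb A.
Proof. exact: leb_shift. Qed.

Lemma mpre_shift (c : R) (A : set R) : measurable A ->
  measurable ((fun y => y + c) @^-1` A).
Proof. by move=> mA; rewrite -[X in measurable X]setTI; exact: mshift. Qed.

Definition blk (m : nat) : set R := `[m%:R, m.+1%:R[%classic.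
Definition Tsh (s : nat -> nat) (x : R) : R := x - (Num.truncn x)%:R + (s (Num.truncn x))%:R.

Lemma XposE x : XP x <-> 0 <= x.
Proof. by rewrite /XP /Xpos /= in_itv /= andbT. Qed.

Lemma blkP m x : blk m x <-> 0 <= x /\ Num.truncn x = m.
Proof.
rewrite /blk /= in_itv /=; split.
  move=> /andP[h1 h2]; have x0 : 0 <= x by apply: le_trans h1.
  by split => //; apply/eqP; rewrite Num.Theory.truncn_eq // h1 h2.
by move=> [x0 <-]; exact: Num.Theory.truncn_itv.
Qed.

Lemma blk_uniq m m' x : blk m x -> blk m' x -> m = m'.
Proof. by move=> /blkP[_ <-] /blkP[_ <-]. Qed.

Lemma Xpos_blk x : XP x -> blk (Num.truncn x) x.
Proof. by move=> /XposE x0; apply/blkP. Qed.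

Lemma blk_Xpos m x : blk m x -> XP x.
Proof. by move=> /blkP[x0 _]; apply/XposE. Qed.

Lemma blk_trans m k x : blk m x -> blk k (x + (k%:R - m%:R)).
Proof.
rewrite /blk /= !in_itv /= -!natr1 => /andP[h1 h2].
apply/andP; split; lra.
Qed.

Lemma blk_meas m : measurable (blk m).
Proof. exact: measurable_itv. Qed.

Lemma Tsh_blk s m x : blk m x -> Tsh s x = x + ((s m)%:R - m%:R).
Proof. move=> /blkP[_ h]; rewrite /Tsh h; lra. Qed.

Lemma Tsh_image s (E : set R) : measurable E -> E `<=` XP ->
  (forall m m' x x', E x -> blk m x -> E x' -> blk m' x' -> s m = s m' -> m = m') ->
  measurable (Tsh s @` E) /\ leb (Tsh s @` E) = leb E.
Proof.
move=> mE EX sinj.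
pose c m : R := (s m)%:R - m%:R.
pose P m := (fun y => y - c m) @^-1` (E `&` blk m).
have eqT : Tsh s @` E = \bigcup_m P m.
  apply/seteqP; split => y.
  - move=> [x Ex <-]; have bx := Xpos_blk (EX _ Ex).
    exists (Num.truncn x) => //; rewrite /P /= (Tsh_blk s bx) addrK; by split.
  - move=> [m _ ]; rewrite /P /= => -[Ey by_]; exists (y - c m) => //.
    by rewrite (Tsh_blk s by_) /c subrK.
have eqE : E = \bigcup_m (E `&` blk m).
  apply/seteqP; split => x.
  - move=> Ex; exists (Num.truncn x) => //; split => //; exact: Xpos_blk (EX _ Ex).
  - by move=> [m _ []].
have mB m : measurable (E `&` blk m) by apply: measurableI => //; exact: blk_meas.
have mP m : measurable (P m) by apply: mpre_shift.
have tP : trivIset setT P.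
  move=> m m' _ _ [y []]; rewrite /P /= => -[E1 b1] [E2 b2].
  have h1 := blk_trans (s m) b1; have h2 := blk_trans (s m') b2.
  rewrite /c subrK in h1; rewrite /c subrK in h2.
  apply: (sinj _ _ _ _ E1 b1 E2 b2); exact: blk_uniq h1 h2.
have tB : trivIset setT (fun m => E `&` blk m).
  by move=> m m' _ _ [x [[_ b1] [_ b2]]]; exact: blk_uniq b1 b2.
split; first by rewrite eqT; exact: bigcup_measurable.
rewrite eqT [in RHS]eqE !measure_bigcup //; try by move=> i _; first [exact: mB | exact: mP].
congr (limn _); apply/funext => n; apply: eq_bigr => m _; exact: leb_shiftN.
Qed.

Lemma Tsh_pre s (D Y : set R) : D `<=` XP ->
  D `&` Tsh s @^-1` Y =
  \bigcup_m (D `&` blk m `&` (fun y => y + ((s m)%:R - m%:R)) @^-1` Y).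
Proof.
move=> DX; apply/seteqP; split => x.
- move=> [Dx Yx]; exists (Num.truncn x) => //; have b := Xpos_blk (DX _ Dx).
  by split; [split|] => //=; rewrite -(Tsh_blk s b).
- by move=> [m _ [[Dx b] Yx]]; split => //=; rewrite (Tsh_blk s b).
Qed.

Lemma Tsh_mfun s (D : set R) : D `<=` XP -> measurable_fun D (Tsh s).
Proof.
move=> DX mD Y mY; rewrite Tsh_pre //.
apply: bigcup_measurable => m _; apply: measurableI.
  by apply: measurableI => //; exact: blk_meas.
exact: mpre_shift.
Qed.

Lemma Tsh_null s (E : set R) : measurable E -> leb E = 0%E ->
  leb (XP `&` Tsh s @^-1` E) = 0%E.
Proof.
move=> mE E0; rewrite Tsh_pre //.
have mX : measurable XP by exact: measurable_itv.
have mP m : measurable (XP `&` blk m `&` (fun y => y + ((s m)%:R - m%:R)) @^-1` E).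
  apply: measurableI; [apply: measurableI => //; exact: blk_meas | exact: mpre_shift].
rewrite measure_bigcup //; last first.
  by move=> m m' _ _ [x [[[_ b1] _] [[_ b2] _]]]; exact: blk_uniq b1 b2.
try by move=> m _; exact: mP.
apply: eseries0 => m _ _.
apply: (@subset_measure0 _ _ _ leb _ _ (mP m) (mpre_shift ((s m)%:R - m%:R) mE)); first by move=> x [].
exact: (etrans (leb_shift _ mE) E0).
Qed.

Lemma mpred (Q : pred nat) : measurable [set x : R | 0 <= x /\ Q (Num.truncn x)].
Proof.
have -> : [set x : R | 0 <= x /\ Q (Num.truncn x)] = \bigcup_(m in [set m | Q m]) blk m.
  apply/seteqP; split => x.
  - by move=> [x0 Qx]; exists (Num.truncn x) => //; apply/blkP.
  - by move=> [m Qm /blkP [x0 e]]; split => //; rewrite e.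
by apply: bigcup_measurable => m _; exact: blk_meas.
Qed.

Lemma Tsh_trunc s (x : R) : 0 <= x ->
  0 <= Tsh s x /\ Num.truncn (Tsh s x) = s (Num.truncn x).
Proof.
move=> x0; have b := Xpos_blk (proj2 (XposE x) x0).
by apply/blkP; rewrite (Tsh_blk s b); exact: blk_trans.
Qed.

Lemma Tsh_id s (x : R) : 0 <= x -> s (Num.truncn x) = Num.truncn x -> Tsh s x = x.
Proof. by move=> _ e; rewrite /Tsh e subrK. Qed.

Lemma Tsh_comp s t (x : R) : 0 <= x -> Tsh t (Tsh s x) = Tsh (t \o s) x.
Proof.
move=> x0; have [_ e] := Tsh_trunc s x0.
rewrite {1}/Tsh e /Tsh /=; lra.
Qed.

End S.

Theorem mainTheorem4 (R : realType) (A : nat -> nat -> bool) :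
  (forall i : nat, exists j : nat, A i j) ->
  exists (f : nat -> R -> R) (D Rg : nat -> set (R)) (F : R -> R),
    A_branching_system A f D Rg F.
Proof.
move=> hA.
pose CP i : pred nat := fun m => A i (pj m).
pose NP i : pred nat := fun m => pj m == i.
have infC i n : exists m, (n <= m)%N /\ CP i m.
  have [j Aij] := hA i; have [m [nm pm]] := pj_inf j n.
  by exists m; split => //; rewrite /CP pm.
have infN i n : exists m, (n <= m)%N /\ NP i m.
  by have [m [nm pm]] := pj_inf i n; exists m; split => //; rewrite /NP pm.
have hC i : exists g : nat -> nat, forall k, CP i (g k) /\ rk (CP i) (g k) = k.
  by have [g hg] := choice (rk_surj (infC i)); exists g.
have hN i : exists g : nat -> nat, forall k, NP i (g k) /\ rk (NP i) (g k) = k.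
  by have [g hg] := choice (rk_surj (infN i)); exists g.
have [gC hgC] := choice hC.
have [gN hgN] := choice hN.
have FC i m : CP i m -> gC i (rk (CP i) m) = m.
  by move=> h; have [h1 h2] := hgC i (rk (CP i) m); exact: (rk_inj h1 h h2).
have FN i m : NP i m -> gN i (rk (NP i) m) = m.
  by move=> h; have [h1 h2] := hgN i (rk (NP i) m); exact: (rk_inj h1 h h2).
pose sig i m := gN i (rk (CP i) m).
pose tau m := gC (pj m) (rk (NP (pj m)) m).
pose D i : set R := [set x | 0 <= x /\ CP i (Num.truncn x)].
pose Rg j : set R := [set x | 0 <= x /\ NP j (Num.truncn x)].
have mD i : measurable (D i) by exact: mpred.
have mRg i : measurable (Rg i) by exact: mpred.
have aeeq (Y Z : set R) : Y = Z -> ae_seteq Y Z.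
  by move=> ->; split; exists set0; split => // x [].
have tauK i m : CP i m -> tau (sig i m) = m.
  move=> h; have [h1 h2] := hgN i (rk (CP i) m).
  rewrite /tau /sig (eqP h1) h2; exact: FC.
have sig_inj i m m' : CP i m -> CP i m' -> sig i m = sig i m' -> m = m'.
  move=> h h' e; apply: (rk_inj h h').
  by rewrite -[LHS](hgN i _).2 -[RHS](hgN i _).2; congr rk.
have tau_inj i m m' : NP i m -> NP i m' -> tau m = tau m' -> m = m'.
  move=> h h' e; apply: (rk_inj h h').
  move: e; rewrite /tau (eqP h) (eqP h') => e.
  by rewrite -[LHS](hgC i _).2 -[RHS](hgC i _).2; congr rk.
have DX i : D i `<=` @Xpos R by move=> x [x0 _]; exact/XposE.
have RX i : Rg i `<=` @Xpos R by move=> x [x0 _]; exact/XposE.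
exists (fun i => Tsh (sig i)), D, Rg, (Tsh tau).
split.
  split; first by apply: Tsh_mfun.
  split.
    by move=> x /XposE x0; apply/XposE; exact: (Tsh_trunc tau x0).1.
  by move=> E mE _ E0; exact: Tsh_null.
split.
  move=> i; split; first exact: mD.
  split; first exact: DX.
  split; first exact: mRg.
  split; first exact: RX.
  split; first by apply: Tsh_mfun.
  have fRg : forall x, D i x -> Rg i (Tsh (sig i) x).
    move=> x [x0 Cx]; have [y0 e] := Tsh_trunc (sig i) x0; split => //.
    by rewrite e /NP /sig; exact: (hgN i _).1.
  split; first exact: fRg.
  apply: aeeq; apply/seteqP; split; first by move=> y [x Dx <-]; exact: fRg.
  move=> y [y0 Ny]; set m' := Num.truncn y in Ny; set m := gC i (rk (NP i) m').
  have b : blk m' y by apply/blkP.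
  have bx := blk_trans m b.
  have /blkP [x0 ex] := bx.
  exists (y + (m%:R - m'%:R)).
    by split => //; rewrite ex; exact: (hgC i _).1.
  rewrite (Tsh_blk _ bx) /sig /m (hgC i _).2 FN //; lra.
split.
  move=> i; exists set0; split => // x [[x0 Cx] ne]; apply: ne.
  by rewrite Tsh_comp //; apply: Tsh_id => //=; exact: tauK.
split.
  move=> i j ij; have -> : Rg i `&` Rg j = set0; last exact: measure0.
  apply/seteqP; split => // x [[_ /eqP h1] [_ /eqP h2]]; apply: ij.
  by rewrite -h1 -h2.
split.
  move=> i j nA; have -> : Rg j `&` D i = set0; last exact: measure0.
  apply/seteqP; split => // x [[_ /eqP h] [_ Cx]].
  by move: nA; rewrite /CP h in Cx; rewrite Cx.
split.
  move=> i j hA'; have -> : Rg j `\` D i = set0; last exact: measure0.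
  apply/seteqP; split => // x [[x0 /eqP h] nD]; apply: nD; split => //.
  by rewrite /CP h.
split.
  move=> U V _; apply: aeeq; apply/seteqP; split.
  - move=> x [[/XposE x0 HU] HV]; exists (pj (Num.truncn x)); last by split => //; rewrite /NP.
    rewrite /AUV; apply/andP; split; apply/allP => u uU.
    + by have [_] := HU u uU.
    + by apply/negP => h; apply: (HV u uU); split.
  - move=> x [j /andP [/allP aU /allP aV] [x0 /eqP h]]; split; [split|].
    + exact/XposE.
    + by move=> u uU; split => //; rewrite /CP h; exact: aU.
    + by move=> v vV [_ Cv]; have := aV v vV; rewrite /CP h in Cv; rewrite Cv.
move=> i; split.
- exists (fun=> 1%E); split; first exact: measurable_cst.
  split; first by move=> *; exact: lee01.
  move=> E mE ED.
  have inj : forall m m' x x', E x -> blk m x -> E x' -> blk m' x' -> sig i m = sig i m' -> m = m'.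
    move=> m m' x x' Ex /blkP[_ bx] Ex' /blkP[_ bx'].
    have [_ Cm] := ED x Ex; have [_ Cm'] := ED x' Ex'.
    rewrite bx in Cm; rewrite bx' in Cm'; exact: sig_inj.
  have [mI eI] := Tsh_image mE (subset_trans ED (DX i)) inj.
  by split => //; rewrite eI integral_cst // mul1e.
- exists (fun=> 1%E); split; first exact: measurable_cst.
  split; first by move=> *; exact: lee01.
  move=> E mE ED.
  have inj : forall m m' x x', E x -> blk m x -> E x' -> blk m' x' -> tau m = tau m' -> m = m'.
    move=> m m' x x' Ex /blkP[_ bx] Ex' /blkP[_ bx'].
    have [_ Cm] := ED x Ex; have [_ Cm'] := ED x' Ex'.
    rewrite bx in Cm; rewrite bx' in Cm'; exact: (tau_inj i).
  have [mI eI] := Tsh_image mE (subset_trans ED (RX i)) inj.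
  by split => //; rewrite eI integral_cst // mul1e.
Qed.
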